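(* In the group-based tree model described in the context (with arbitrary real edge parameters), let $e$ be a pendant edge of $\mathscr{T}$ with leaf $i$ and internal endpoint $\nu$. Let $j,k$ be leaves distinct from $i$ such that the path between $j$ and $k$ passes through $\nu$. For $a,b,c\in G$ let $w(a,b,c)\in G^m$ assign $a$ to leaf $i$, $b$ to leaf $j$, $c$ to leaf $k$ and $0$ to all other leaves. Then for every $h\in G$, $q_{w(0,-h,h)}\neq 0$ and $$\big[\check f^{(e)}(h)\big]^2=\frac{q_{w(h,-h,0)}\;q_{w(-h,0,h)}}{q_{w(0,-h,h)}}.$$
   Context: Group-based model on a tree. $G$ is a finite abelian group written additively with identity $0$; fix $G\cong\prod_k\mathbb{Z}_{n_k}$ and for $g,h\in G$ put $\hat g(h)=\prod_k\exp(2\pi i\,g_kh_k/n_k)$. The Fourier transform of $a:G\to\mathbb{C}$ is $\check a(g)=\sum_{h\in G}\hat g(h)a(h)$. $\mathscr{T}$ is a finite tree with $m$ leaves, one of which is designated the root leaf $r$. Each edge $e$ carries a function $\psi^{(e)}:G\to\mathbb{R}$ with $\sum_g\psi^{(e)}(g)=0$ and $\psi^{(e)}(g)=\psi^{(e)}(-g)$ (its values at $g\ne0$ are the edge parameters of $e$); put $Q^{(e)}_{g,h}=\psi^{(e)}(h-g)$, $P^{(e)}=\exp(Q^{(e)})$, $f^{(e)}(h)=P^{(e)}_{0,h}$, so $P^{(e)}_{g,h}=f^{(e)}(h-g)$. Edges are directed away from $r$. For $\mathbf g\in G^{m}$ (indexed by all leaves, $r$ included), $p_{\mathbf g}=\sum_\sigma\prod_{e=(u\to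 v)}P^{(e)}_{\sigma(u),\sigma(v)}$, the sum over all maps $\sigma$ from vertices to $G$ with $\sigma(r)=0$ and $\sigma$ equal to $\mathbf g$ on the leaves. The Fourier transform is $q_{\mathbf g}=\sum_{\mathbf h\in G^m}\prod_{x}\hat g_x(h_x)\,p_{\mathbf h}$. For an edge $e$, $\Lambda(e)$ is the set of leaves whose path to $r$ contains $e$, and ${}^*g_e=\sum_{x\in\Lambda(e)}g_x$. It is a known fact (Hendy; Evans–Speed) that $q_{\mathbf g}=\prod_{e}\check f^{(e)}({}^*g_e)$ for all $\mathbf g\in G^m$. *)

(* Defs.v *)
From HB Require Import structures.
From mathcomp Require Import all_boot all_algebra.
From Stdlib Require Import Reals.

Set Implicit Arguments.
Unset Strict Implicit.
Unset Printing Implicit Defensive.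

Definition C := (R * R)%type.
Definition C0 : C := (R0, R0).
Definition C1 : C := (R1, R0).
Definition RtoC (x : R) : C := (x, R0).
Definition Cadd (z w : C) : C := (Rplus z.1 w.1, Rplus z.2 w.2).
Definition Cmul (z w : C) : C :=
  (Rminus (Rmult z.1 w.1) (Rmult z.2 w.2), Rplus (Rmult z.1 w.2) (Rmult z.2 w.1)).
Definition Cinv (z : C) : C :=
  let d := Rplus (Rmult z.1 z.1) (Rmult z.2 z.2) in
  (Rdiv z.1 d, Ropp (Rdiv z.2 d)).
Definition Cdiv (z w : C) : C := Cmul z (Cinv w).
Definition Cexp2pi (t : R) : C := (cos (Rmult (Rmult 2 PI) t), sin (Rmult (Rmult 2 PI) t)).

(* The finite abelian group G = Z_{n_1} x ... x Z_{n_r}.                     *)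
(* [ns] is the list of moduli (all assumed >= 1); the factor for modulus n   *)
(* is 'I_(n.-1).+1 = Z/nZ.  The empty product is represented by Z_1 = 'I_1.  *)
Fixpoint Gty (ns : seq nat) : finType :=
  match ns with
  | [::] => 'I_1
  | n :: ns' => ('I_(n.-1).+1 * Gty ns')%type
  end.

Fixpoint gzero (ns : seq nat) : Gty ns :=
  match ns return Gty ns with
  | [::] => ord0
  | n :: ns' => (@GRing.zero 'I_(n.-1).+1, gzero ns')
  end.

Fixpoint gadd (ns : seq nat) : Gty ns -> Gty ns -> Gty ns :=
  match ns return Gty ns -> Gty ns -> Gty ns with
  | [::] => fun _ _ => ord0
  | n :: ns' => fun g h : ('I_(n.-1).+1 * Gty ns')%type =>
      (GRing.add g.1 h.1, gadd g.2 h.2)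
  end.

Fixpoint gopp (ns : seq nat) : Gty ns -> Gty ns :=
  match ns return Gty ns -> Gty ns with
  | [::] => fun _ => ord0
  | n :: ns' => fun g : ('I_(n.-1).+1 * Gty ns')%type =>
      (GRing.opp g.1, gopp g.2)
  end.

Arguments gzero {ns}.

Fixpoint ghat (ns : seq nat) : Gty ns -> Gty ns -> C :=
  match ns return Gty ns -> Gty ns -> C with
  | [::] => fun _ _ => C1
  | n :: ns' => fun g h : ('I_(n.-1).+1 * Gty ns')%type =>
      Cmul (Cexp2pi (Rdiv (INR (nat_of_ord g.1 * nat_of_ord h.1)) (INR n)))
           (ghat g.2 h.2)
  end.

Notation "\Rsum_ ( i : T ) F" := (\big[Rplus/R0]_(i : T) F)
  (at level 41, F at level 41, i, T at level 50).
Notation "\Csum_ ( i : T ) F" := (\big[Cadd/C0]_(i : T) F)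
  (at level 41, F at level 41, i, T at level 50).

Definition fourier (ns : seq nat) (a : Gty ns -> R) (g : Gty ns) : C :=
  \Csum_(h : Gty ns) Cmul (ghat g h) (RtoC (a h)).

Definition mpow (T : finType) (Q : T -> T -> R) : nat -> T -> T -> R :=
  fix mp n := match n with
  | 0 => fun g h => if g == h then R1 else R0
  | n'.+1 => fun g h => \Rsum_(k : T) Rmult (mp n' g k) (Q k h)
  end.

Definition is_mexp (T : finType) (Q P : T -> T -> R) : Prop :=
  forall g h : T,
    Un_cv (fun N => sum_f_R0 (fun n => Rdiv (mpow Q n g h) (INR (Factorial.fact n))) N) (P g h).

Definition Qmat (ns : seq nat) (psi : Gty ns -> R) (g h : Gty ns) : R :=
  psi (gadd h (gopp g)).

(* Rooted trees.  A finite tree is given by a vertex type V, the root leaf   *)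
(* rt and the parent map par (par rt = rt).  Its edges are the pairs         *)
(* (par v, v) for v <> rt, directed away from rt; the edge (par v -> v) is   *)
(* indexed by v.                                                              *)
Definition is_rooted_tree (V : finType) (rt : V) (par : V -> V) : Prop :=
  par rt = rt /\ forall v : V, exists k : nat, iter k par v = rt.

Definition children (V : finType) (rt : V) (par : V -> V) (v : V) : {set V} :=
  [set u | (u != rt) && (par u == v)].

Definition degree (V : finType) (rt : V) (par : V -> V) (v : V) : nat :=
  (#|children rt par v| + (v != rt))%N.

Definition is_leaf (V : finType) (rt : V) (par : V -> V) (v : V) : bool :=
  degree rt par v == 1%N.

(* The type of leaves (the index set of G^m). *)
Definition leaf (V : finType) (rt : V) (par : V -> V) : finType :=
  {v : V | is_leaf rt par v}.

Definition adj (V : finType) (rt : V) (par : V -> V) : rel V :=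
  fun a b => ((b != rt) && (par b == a)) || ((a != rt) && (par a == b)).

Definition path_through (V : finType) (rt : V) (par : V -> V) (a b c : V) : Prop :=
  exists p : seq V,
    [&& path (adj rt par) a p, last a p == b, uniq (a :: p) & c \in a :: p].

(* x is a descendant of v (or v itself): the path from x to the root contains
   the edge (par v -> v), for v <> rt. *)
Definition below (V : finType) (par : V -> V) (v x : V) : bool :=
  connect (fun a b => par a == b) x v.

Definition pprob (ns : seq nat) (V : finType) (rt : V) (par : V -> V)
    (P : V -> Gty ns -> Gty ns -> R) (g : {ffun leaf rt par -> Gty ns}) : R :=
  \big[Rplus/R0]_(sigma : {ffun V -> Gty ns} |
        (sigma rt == gzero) &&
        [forall x : leaf rt par, sigma (val x) == g x])
     \big[Rmult/R1]_(v : V | v != rt) P v (sigma (par v)) (sigma v).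

Definition qfourier (ns : seq nat) (V : finType) (rt : V) (par : V -> V)
    (P : V -> Gty ns -> Gty ns -> R) (g : {ffun leaf rt par -> Gty ns}) : C :=
  \Csum_(h : {ffun leaf rt par -> Gty ns})
     Cmul (\big[Cmul/C1]_(x : leaf rt par) ghat (g x) (h x)) (RtoC (pprob P h)).

Definition fedge (ns : seq nat) (V : finType) (P : V -> Gty ns -> Gty ns -> R)
    (v : V) (h : Gty ns) : R :=
  P v (gzero) h.

Definition wvec (ns : seq nat) (V : finType) (rt : V) (par : V -> V)
    (i j k : leaf rt par) (a b c : Gty ns) : {ffun leaf rt par -> Gty ns} :=
  [ffun x => if x == i then a else if x == j then b else if x == k then c
             else gzero].

(* Main.v *)
From Pilot Require Import Defs.
From HB Require Import structures.
From mathcomp Require Import all_boot all_algebra.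
From Stdlib Require Import Reals Lra.

Set Implicit Arguments.
Unset Strict Implicit.
Unset Printing Implicit Defensive.
Import GRing.Theory.
Local Notation C := Pilot.Defs.C.
Local Notation C0 := Pilot.Defs.C0.
Local Notation C1 := Pilot.Defs.C1.

Lemma Cext (z w : C) : z.1 = w.1 -> z.2 = w.2 -> z = w.
Proof. by case: z w => [a b] [c d] /= -> ->. Qed.

Ltac cring := repeat match goal with z : C |- _ => destruct z end;
  apply Cext; rewrite /= /Cadd /Cmul /C1 /C0 /RtoC /=; ring.

Lemma CaddA : associative Cadd. Proof. move=> *; cring. Qed.
Lemma CaddC : commutative Cadd. Proof. move=> *; cring. Qed.
Lemma Cadd0 : left_id C0 Cadd. Proof. move=> *; cring. Qed.
Lemma CmulA : associative Cmul. Proof. move=> *; cring. Qed.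
Lemma CmulC : commutative Cmul. Proof. move=> *; cring. Qed.
Lemma Cmul1 : left_id C1 Cmul. Proof. move=> *; cring. Qed.
Lemma Cmul0l : left_zero C0 Cmul. Proof. move=> *; cring. Qed.
Lemma Cmul0r : right_zero C0 Cmul. Proof. move=> *; cring. Qed.
Lemma CmulDl : left_distributive Cmul Cadd. Proof. move=> *; cring. Qed.
Lemma CmulDr : right_distributive Cmul Cadd. Proof. move=> *; cring. Qed.

HB.instance Definition _ := Monoid.isComLaw.Build C C0 Cadd CaddA CaddC Cadd0.
HB.instance Definition _ := Monoid.isComLaw.Build C C1 Cmul CmulA CmulC Cmul1.
HB.instance Definition _ := Monoid.isMulLaw.Build C C0 Cmul Cmul0l Cmul0r.
HB.instance Definition _ := Monoid.isAddLaw.Build C Cmul Cadd CmulDl CmulDr.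

Lemma RaddA : associative Rplus. Proof. move=> *; ring. Qed.
Lemma RaddC : commutative Rplus. Proof. move=> *; ring. Qed.
Lemma Radd0 : left_id R0 Rplus. Proof. move=> *; ring. Qed.
Lemma RmulA : associative Rmult. Proof. move=> *; ring. Qed.
Lemma RmulC : commutative Rmult. Proof. move=> *; ring. Qed.
Lemma Rmul1 : left_id R1 Rmult. Proof. move=> *; ring. Qed.
Lemma Rmul0l : left_zero R0 Rmult. Proof. move=> *; ring. Qed.
Lemma Rmul0r : right_zero R0 Rmult. Proof. move=> *; ring. Qed.
Lemma RmulDl : left_distributive Rmult Rplus. Proof. move=> *; ring. Qed.
Lemma RmulDr : right_distributive Rmult Rplus. Proof. move=> *; ring. Qed.

HB.instance Definition _ := Monoid.isComLaw.Build R R0 Rplus RaddA RaddC Radd0.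
HB.instance Definition _ := Monoid.isComLaw.Build R R1 Rmult RmulA RmulC Rmul1.
HB.instance Definition _ := Monoid.isMulLaw.Build R R0 Rmult Rmul0l Rmul0r.
HB.instance Definition _ := Monoid.isAddLaw.Build R Rmult Rplus RmulDl RmulDr.

Section G.
Variable ns : seq nat.
Local Notation G := (Gty ns).

Lemma gaddA : associative (@gadd ns).
Proof. elim: ns => [|n l IH] /= x y z; first by apply/val_inj.
by rewrite addrA IH. Qed.
Lemma gaddC : commutative (@gadd ns).
Proof. elim: ns => [|n l IH] /= x y; first by apply/val_inj.
by rewrite addrC IH. Qed.
Lemma gadd0 : left_id gzero (@gadd ns).
Proof. elim: ns => [|n l IH] /= x; first by apply/val_inj; case: x => [[|]].
by case: x => a b /=; rewrite add0r IH. Qed.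
Lemma gaddN (x : G) : gadd x (gopp x) = gzero.
Proof. elim: ns x => [|n l IH] /= x; first by apply/val_inj.
by rewrite subrr IH. Qed.
End G.

HB.instance Definition _ ns := Monoid.isComLaw.Build (Gty ns) gzero (@gadd ns) (@gaddA ns) (@gaddC ns) (@gadd0 ns).
Local Open Scope R_scope.

Section G2.
Variable ns : seq nat.
Local Notation G := (Gty ns).
Lemma gaddNl (x : G) : gadd (gopp x) x = gzero.
Proof. by rewrite gaddC gaddN. Qed.
Lemma gadd0r (x : G) : gadd x gzero = x.
Proof. by rewrite gaddC gadd0. Qed.
Lemma gaddKl (a x : G) : gadd (gopp a) (gadd a x) = x.
Proof. by rewrite gaddA gaddNl gadd0. Qed.
Lemma gaddK (a x : G) : gadd (gadd x a) (gopp a) = x.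
Proof. by rewrite -gaddA gaddN gadd0r. Qed.
Lemma gadd_injr (a : G) : injective (fun x => gadd x a).
Proof. move=> x y /= E; by rewrite -(gaddK a x) E gaddK. Qed.
Lemma gopp_uniq (x y : G) : gadd x y = gzero -> y = gopp x.
Proof. move=> E; by rewrite -(gaddKl x y) E gadd0r. Qed.
Lemma goppK (x : G) : gopp (gopp x) = x.
Proof. by symmetry; apply: gopp_uniq; rewrite gaddNl. Qed.
Lemma gopp_inj : injective (@gopp ns).
Proof. by move=> x y E; rewrite -(goppK x) E goppK. Qed.
Lemma gopp0 : gopp (gzero : G) = gzero.
Proof. by symmetry; apply: gopp_uniq; rewrite gadd0. Qed.
Lemma goppD (x y : G) : gopp (gadd x y) = gadd (gopp x) (gopp y).
Proof. symmetry; apply: gopp_uniq.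
by rewrite gaddA (gaddC x y) -(gaddA y) gaddN gadd0r gaddN. Qed.
End G2.

Definition Cconj (z : C) : C := (z.1, Ropp z.2).

Lemma Cexp2pi_add s t : Cexp2pi (s + t) = Cmul (Cexp2pi s) (Cexp2pi t).
Proof. apply: Cext; rewrite /= Rmult_plus_distr_l ?cos_plus ?sin_plus; ring. Qed.

Lemma Cexp2pi_nat k : Cexp2pi (INR k) = C1.
Proof.
have E : 2 * PI * INR k = 0 + 2 * INR k * PI by ring.
apply: Cext; rewrite /= E ?cos_period ?sin_period ?cos_0 ?sin_0 //.
Qed.

Lemma Cexp2pi_0 : Cexp2pi 0 = C1.
Proof. by rewrite -(Cexp2pi_nat 0). Qed.

Lemma Cexp2pi_Nnat k : Cexp2pi (- INR k) = C1.
Proof.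
have E : 2 * PI * - INR k = - (2 * PI * INR k) by ring.
have := Cexp2pi_nat k; rewrite /Cexp2pi E cos_neg sin_neg => -[-> ->].
by apply: Cext => /=; ring.
Qed.

Lemma Cexp2pi_unit t : Cmul (Cexp2pi t) (Cconj (Cexp2pi t)) = C1.
Proof.
apply: Cext => /=; last ring.
have H := sin2_cos2 (2 * PI * t); rewrite /Rsqr in H; rewrite /C1 /=; nra.
Qed.

Section Ghat.
Variable ns : seq nat.
Hypothesis Hns : all (fun n : nat => (0 < n)%nat) ns.
Local Notation G := (Gty ns).

Lemma ghat_sym (g h : G) : ghat g h = ghat h g.
Proof. elim: ns g h => [|n l IH] //= g h; by rewrite mulnC IH. Qed.

Lemma comp_add n (g a b : nat) : (0 < n)%nat ->
  Cexp2pi (INR (g * ((a + b) %% n.-1.+1)) / INR n) =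
  Cmul (Cexp2pi (INR (g * a) / INR n)) (Cexp2pi (INR (g * b) / INR n)).
Proof.
move=> n0; rewrite prednK //.
have Hn : INR n <> 0 by apply: not_0_INR => E; move: n0; rewrite E.
have E : (g * a + g * b = g * ((a + b) %% n) + (g * ((a + b) %/ n)) * n)%nat.
  by rewrite -mulnDr {1}(divn_eq (a + b) n) mulnDr mulnA addnC.
have E2 : INR (g * ((a + b) %% n)) / INR n =
   INR (g * a) / INR n + INR (g * b) / INR n + - INR (g * ((a + b) %/ n)).
  have E' := f_equal INR E; rewrite !plus_INR (mult_INR _ n) in E'.
  apply: (Rmult_eq_reg_r (INR n)) => //.
  rewrite !Rmult_plus_distr_r /Rdiv !Rmult_assoc !Rinv_l // !Rmult_1_r; lra.
by rewrite E2 Cexp2pi_add Cexp2pi_Nnat Cexp2pi_add CmulC Cmul1.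
Qed.

Lemma ghat_addr (g a b : G) : ghat g (gadd a b) = Cmul (ghat g a) (ghat g b).
Proof.
elim: ns Hns g a b => [|n l IH] /= Hn g a b; first by apply: Cext => /=; ring.
case/andP: Hn => n0 Hl.
rewrite [nat_of_ord _]/= comp_add // IH //.
move: (Cexp2pi _) (Cexp2pi _) (ghat g.2 a.2) (ghat g.2 b.2) => *; cring.
Qed.

Lemma ghat_addl (g1 g2 a : G) : ghat (gadd g1 g2) a = Cmul (ghat g1 a) (ghat g2 a).
Proof. by rewrite ghat_sym ghat_addr !(ghat_sym a). Qed.

Lemma Cunit_uniq (z w1 w2 : C) : Cmul z w1 = C1 -> Cmul z w2 = C1 -> w1 = w2.
Proof.
move=> E1 E2; rewrite -(Cmul1 w1) -E2 CmulC CmulA (CmulC w1) E1 Cmul1 //.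
Qed.

Lemma ghat_0r (g : G) : ghat g gzero = C1.
Proof.
elim: ns g => [|n l IH] //= g; rewrite IH muln0 /Rdiv Rmult_0_l Cexp2pi_0.
by apply: Cmul1.
Qed.

Lemma ghat_0l (g : G) : ghat gzero g = C1.
Proof. by rewrite ghat_sym ghat_0r. Qed.

Lemma ghat_unit (g a : G) : Cmul (ghat g a) (Cconj (ghat g a)) = C1.
Proof.
elim: ns g a => [|n l IH] //= g a; first by apply: Cext => /=; ring.
move: (IH g.2 a.2) (Cexp2pi_unit (INR (g.1 * a.1) / INR n)).
move: (ghat _ _) (Cexp2pi _) => x y E1 E2.
have -> : Cmul (Cmul y x) (Cconj (Cmul y x)) =
  Cmul (Cmul x (Cconj x)) (Cmul y (Cconj y)) by rewrite /Cconj; cring.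
by rewrite E1 E2 Cmul1.
Qed.

Lemma ghat_oppr (g a : G) : ghat g (gopp a) = Cconj (ghat g a).
Proof.
apply: (@Cunit_uniq (ghat g a)); last exact: ghat_unit.
by rewrite -ghat_addr gaddN ghat_0r.
Qed.

Lemma ghat_oppl (g a : G) : ghat (gopp g) a = Cconj (ghat g a).
Proof. by rewrite ghat_sym ghat_oppr ghat_sym. Qed.

Lemma ghat_opp2 (g a : G) : ghat (gopp g) a = ghat g (gopp a).
Proof. by rewrite ghat_oppl ghat_oppr. Qed.

End Ghat.

Lemma CV_const (c : R) : Un_cv (fun _ => c) c.
Proof. move=> eps He; exists 0%nat => n _; rewrite /Rdist Rminus_eq_0 Rabs_R0 //. Qed.

Lemma Un_cv_ext (u v : nat -> R) l : (forall n, u n = v n) -> Un_cv u l -> Un_cv v l.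
Proof. move=> E H eps He; case: (H eps He) => N HN; exists N => n Hn; rewrite -E; exact: HN. Qed.

Lemma CV_big (I : Type) (r : seq I) (P : pred I) (u : I -> nat -> R) (l : I -> R) :
  (forall i, P i -> Un_cv (u i) (l i)) ->
  Un_cv (fun N => \big[Rplus/R0]_(i <- r | P i) u i N) (\big[Rplus/R0]_(i <- r | P i) l i).
Proof.
move=> H; elim: r => [|i r IH].
  rewrite big_nil; apply: Un_cv_ext (CV_const R0) => n; by rewrite big_nil.
rewrite big_cons; case: (boolP (P i)) => Pi.
  apply: Un_cv_ext (CV_plus _ _ _ _ (H i Pi) IH) => n; by rewrite big_cons Pi.
apply: Un_cv_ext IH => n; by rewrite big_cons (negPf Pi).
Qed.

Lemma sum_f_big (f : nat -> R) N : sum_f_R0 f N = \big[Rplus/R0]_(n < N.+1) f n.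
Proof.
elim: N => [|N IH]; first by rewrite big_ord1.
by rewrite /= IH [in RHS]big_ord_recr.
Qed.

Lemma RtoC_add r s : RtoC (r + s) = Cadd (RtoC r) (RtoC s).
Proof. apply: Cext => /=; ring. Qed.
Lemma RtoC_mul r s : RtoC (r * s) = Cmul (RtoC r) (RtoC s).
Proof. apply: Cext => /=; ring. Qed.
Lemma RtoC_sum (I : Type) (r : seq I) (P : pred I) (F : I -> R) :
  RtoC (\big[Rplus/R0]_(i <- r | P i) F i) = \big[Cadd/C0]_(i <- r | P i) RtoC (F i).
Proof. exact: (big_morph RtoC RtoC_add). Qed.
Lemma fst_sum (I : Type) (r : seq I) (P : pred I) (F : I -> C) :
  (\big[Cadd/C0]_(i <- r | P i) F i).1 = \big[Rplus/R0]_(i <- r | P i) (F i).1.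
Proof. by apply: (big_morph fst) => //. Qed.
Lemma snd_sum (I : Type) (r : seq I) (P : pred I) (F : I -> C) :
  (\big[Cadd/C0]_(i <- r | P i) F i).2 = \big[Rplus/R0]_(i <- r | P i) (F i).2.
Proof. by apply: (big_morph snd) => //. Qed.
Lemma Cconj_add z w : Cconj (Cadd z w) = Cadd (Cconj z) (Cconj w).
Proof. apply: Cext => /=; ring. Qed.
Lemma Cconj_sum (I : Type) (r : seq I) (P : pred I) (F : I -> C) :
  Cconj (\big[Cadd/C0]_(i <- r | P i) F i) = \big[Cadd/C0]_(i <- r | P i) Cconj (F i).
Proof. apply: (big_morph Cconj Cconj_add); apply: Cext => /=; ring. Qed.
Lemma Cmul_RtoC z r : Cmul z (RtoC r) = (z.1 * r, z.2 * r).
Proof. apply: Cext => /=; ring. Qed.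

Section Edge.
Variable ns : seq nat.
Hypothesis Hns : all (fun n : nat => (0 < n)%nat) ns.
Local Notation G := (Gty ns).
Variable psi : G -> R.
Hypothesis Hsum : \big[Rplus/R0]_(g : G) psi g = R0.
Hypothesis Hsym : forall g, psi g = psi (gopp g).
Variable Pv : G -> G -> R.
Hypothesis HPv : is_mexp (Qmat psi) Pv.
Local Notation Q := (Qmat psi).

Lemma gsub_transl (g h a : G) : gadd (gadd h a) (gopp (gadd g a)) = gadd h (gopp g).
Proof. by rewrite goppD (gaddC (gopp g)) gaddA -(gaddA h) gaddN gadd0r. Qed.

Lemma mpow_transl n (a g h : G) : mpow Q n (gadd g a) (gadd h a) = mpow Q n g h.
Proof.
elim: n g h => [|n IH] g h /=; first by rewrite (inj_eq (@gadd_injr _ a)).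
rewrite (reindex_inj (@gadd_injr _ a)) /=; apply: eq_bigr => k _.
by rewrite IH /Qmat gsub_transl.
Qed.

Lemma P_transl (a g h : G) : Pv (gadd g a) (gadd h a) = Pv g h.
Proof.
apply: UL_sequence (HPv (gadd g a) (gadd h a)) _.
apply: Un_cv_ext (HPv g h) => N; apply: sum_eq => n _; by rewrite mpow_transl.
Qed.

Lemma P_f (g h : G) : Pv g h = Pv gzero (gadd h (gopp g)).
Proof. by rewrite -(P_transl (gopp g)) gaddN. Qed.


Local Notation psic := (fourier psi).

Lemma psic_opp (a : G) : psic (gopp a) = psic a.
Proof.
rewrite /fourier [RHS](reindex_inj (@gopp_inj ns)) /=.
apply: eq_bigr => x _. rewrite ghat_opp2 //. congr (Cmul _ (RtoC _)); exact: Hsym.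
Qed.

Lemma psic_conj (a : G) : psic (gopp a) = Cconj (psic a).
Proof.
rewrite /fourier Cconj_sum; apply: eq_bigr => x _.
rewrite ghat_oppl //; apply: Cext => /=; ring.
Qed.

Lemma psic_real (a : G) : psic a = RtoC (psic a).1.
Proof.
have := psic_conj a; rewrite psic_opp.
case: (psic a) => z1 z2 [] E; apply: Cext => //=; lra.
Qed.

Definition lam (a : G) := (psic a).1.

Lemma lam_opp (a : G) : lam (gopp a) = lam a.
Proof. by rewrite /lam psic_opp. Qed.

Lemma lam0 : lam gzero = R0.
Proof.
rewrite /lam /fourier fst_sum; rewrite -[in RHS]Hsum; apply: eq_bigr => x _.
rewrite ghat_0l //=; ring.
Qed.

Lemma mpow_fourier n (a : G) :
  \big[Cadd/C0]_(x : G) Cmul (ghat a x) (RtoC (mpow Q n gzero x)) = RtoC (lam a ^ n).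
Proof.
elim: n => [|n IH] /=.
  rewrite (bigD1 gzero) //= eqxx big1 => [|x /negPf]; last first.
    by rewrite eq_sym => ->; apply: Cext => /=; ring.
  rewrite ghat_0r //; apply: Cext => /=; ring.
transitivity (\big[Cadd/C0]_(k : G) Cmul (RtoC (mpow Q n gzero k))
   (\big[Cadd/C0]_(x : G) Cmul (ghat a x) (RtoC (Q k x)))).
  under eq_bigr do rewrite RtoC_sum big_distrr /=.
  rewrite exchange_big /=; apply: eq_bigr => k _; rewrite big_distrr /=.
  apply: eq_bigr => x _; rewrite RtoC_mul; cring.
transitivity (\big[Cadd/C0]_(k : G) Cmul (Cmul (ghat a k) (RtoC (mpow Q n gzero k))) (psic a)).
  apply: eq_bigr => k _.
  rewrite (reindex_inj (@gadd_injr _ k)) /= /Qmat.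
  have -> : \big[Cadd/C0]_(j : G) Cmul (ghat a (gadd j k)) (RtoC (psi (gadd (gadd j k) (gopp k))))
     = Cmul (ghat a k) (psic a).
    rewrite /fourier big_distrr /=; apply: eq_bigr => j _.
    rewrite gaddK ghat_addr //; cring.
  cring.
by rewrite -big_distrl /= IH psic_real -RtoC_mul Rmult_comm.
Qed.


Lemma lim_comb (c : G -> R) (t : nat -> R) L :
  (forall n, \big[Rplus/R0]_(x : G) (c x * mpow Q n gzero x) = t n) ->
  Un_cv (fun N => sum_f_R0 (fun n => / INR (Factorial.fact n) * t n) N) L ->
  \big[Rplus/R0]_(x : G) (c x * Pv gzero x) = L.
Proof.
move=> Ht HL; apply: UL_sequence HL.
have H1 := @CV_big G (index_enum G) predT
  (fun x N => c x * sum_f_R0 (fun n => mpow Q n gzero x / INR (Factorial.fact n)) N)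
  (fun x => c x * Pv gzero x) (fun x _ => CV_mult _ _ _ _ (CV_const (c x)) (HPv gzero x)).
apply: Un_cv_ext H1 => N.
rewrite sum_f_big.
under eq_bigr do rewrite sum_f_big big_distrr /=.
rewrite exchange_big /=; apply: eq_bigr => n _; rewrite -Ht big_distrr /=.
apply: eq_bigr => x _; rewrite /Rdiv; ring.
Qed.

Lemma exp_cv (x : R) : Un_cv (fun N => sum_f_R0 (fun n => / INR (Factorial.fact n) * x ^ n) N) (exp x).
Proof. exact: (proj2_sig (exist_exp x)). Qed.

Lemma fourier_f (a : G) : fourier (fun h => Pv gzero h) a = RtoC (exp (lam a)).
Proof.
apply: Cext; rewrite /fourier ?fst_sum ?snd_sum.
  under eq_bigr do rewrite Cmul_RtoC /=.
  apply: (lim_comb (t := fun n => lam a ^ n)); last exact: exp_cv.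
  move=> n; have := f_equal fst (mpow_fourier n a); rewrite fst_sum /= => <-.
  apply: eq_bigr => x _ /=; ring.
under eq_bigr do rewrite Cmul_RtoC /=.
apply: (lim_comb (t := fun n => R0)).
  move=> n; have := f_equal snd (mpow_fourier n a); rewrite snd_sum /= => E.
  apply: eq_trans E.
  apply: eq_bigr => x _ /=; ring.
apply: Un_cv_ext (CV_const R0) => N; elim: N => [|N IH] /=; ring_simplify; try lra.
rewrite -IH; ring.
Qed.

End Edge.

Section Tree.
Variables (V : finType) (rt : V) (par : V -> V).
Hypothesis Htree : is_rooted_tree rt par.

Lemma below_fconnect u x : below par u x = fconnect par x u.
Proof. by []. Qed.

Lemma below_refl u : below par u u.
Proof. exact: connect0. Qed.

Lemma below_step u x : x != u -> below par u x = below par u (par x).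
Proof. move=> /negPf H; by rewrite !below_fconnect fconnect_eqVf H. Qed.

Lemma iter_rt n : iter n par rt = rt.
Proof. case: Htree => H _; elim: n => //= n ->; exact: H. Qed.

Lemma below_rt u : below par u rt -> u = rt.
Proof. rewrite below_fconnect => /iter_findex <-; exact: iter_rt. Qed.

Lemma iter_mul v m t : iter m par v = v -> iter (t * m) par v = v.
Proof. move=> H; elim: t => [|t IH] //=; by rewrite mulSn iterD IH H. Qed.

Lemma not_below_par v : v != rt -> ~~ below par v (par v).
Proof.
move=> vrt; apply/negP; rewrite below_fconnect => /iter_findex.
set m := findex _ _ _ => Hm.
have Hm1 : iter m.+1 par v = v by rewrite iterSr.
case: Htree => _ /(_ v) [k Hk].
have := iter_mul k Hm1.
have Hle : (k <= k * m.+1)%nat by apply: leq_pmulr.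
rewrite -(subnK Hle) iterD Hk iter_rt => E.
by move: vrt; rewrite -E eqxx.
Qed.

Lemma par_neq v : v != rt -> par v != v.
Proof.
move=> vrt; apply/eqP => E; move: (not_below_par vrt); by rewrite E below_refl.
Qed.

Definition ancd (u x : V) := (u != rt) && below par u x.

Lemma anc_rt u : ancd u rt = false.
Proof. rewrite /ancd; case: eqP => //= urt; apply/negP => /below_rt; by []. Qed.

Lemma anc_step v u : v != rt -> ancd u v = (u == v) || ancd u (par v).
Proof.
move=> vrt; rewrite /ancd; case: (eqVneq u v) => [->|uv] /=; first by rewrite vrt below_refl.
by rewrite below_step // eq_sym.
Qed.

Lemma anc_par v : v != rt -> ancd v (par v) = false.
Proof. move=> vrt; by rewrite /ancd vrt (negPf (not_below_par vrt)). Qed.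

End Tree.

Section Hendy.
Variable ns : seq nat.
Hypothesis Hns : all (fun n : nat => (0 < n)%nat) ns.
Local Notation G := (Gty ns).
Variables (V : finType) (rt : V) (par : V -> V).
Hypothesis Htree : is_rooted_tree rt par.
Variable P : V -> G -> G -> R.
Hypothesis HPf : forall v, v != rt -> forall a b, P v a b = fedge P v (gadd b (gopp a)).
Local Notation anc := (ancd rt par).

Definition fromD (d : {ffun V -> G}) : {ffun V -> G} :=
  [ffun v => \big[@gadd ns/gzero]_(u | anc u v) d u].
Definition toD (s : {ffun V -> G}) : {ffun V -> G} :=
  [ffun v => if v == rt then gzero else gadd (s v) (gopp (s (par v)))].

Lemma fromD_rec d v : v != rt -> fromD d v = gadd (d v) (fromD d (par v)).
Proof.
move=> vrt; rewrite !ffunE (bigD1 v) /=; last by rewrite /ancd vrt below_refl.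
congr gadd; apply: eq_bigl => u; rewrite anc_step //.
case: (eqVneq u v) => [->|] /=; last by rewrite andbT.
by rewrite anc_par.
Qed.

Lemma fromD_rt d : fromD d rt = gzero.
Proof. rewrite ffunE big_pred0 // => u; exact: anc_rt. Qed.

Lemma toD_fromD (d : {ffun V -> G}) : d rt = gzero -> toD (fromD d) = d.
Proof.
move=> drt; apply/ffunP => v; rewrite ffunE.
case: (eqVneq v rt) => [->|vrt] //; by rewrite fromD_rec // gaddK.
Qed.

Lemma fromD_toD (s : {ffun V -> G}) : s rt = gzero -> fromD (toD s) = s.
Proof.
move=> srt; apply/ffunP => v.
case: Htree => _ /(_ v) [k Hk]; elim: k v Hk => [|k IH] v Hk.
  by rewrite /= in Hk; rewrite Hk fromD_rt.
case: (eqVneq v rt) => [->|vrt]; first by rewrite fromD_rt.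
rewrite fromD_rec // IH; last by rewrite -iterSr.
by rewrite ffunE (negPf vrt) -gaddA gaddNl gadd0r.
Qed.


Local Notation L := (leaf rt par).
Definition starg (g : {ffun L -> G}) (u : V) : G :=
  \big[@gadd ns/gzero]_(x | anc u (val x)) g x.

Lemma hendy_A (g : {ffun L -> G}) :
  qfourier P g = \big[Cadd/C0]_(s : {ffun V -> G} | s rt == gzero)
   Cmul (\big[Cmul/C1]_(x : L) ghat (g x) (s (val x)))
        (RtoC (\big[Rmult/R1]_(v | v != rt) P v (s (par v)) (s v))).
Proof.
rewrite /qfourier /pprob.
under eq_bigr do rewrite RtoC_sum big_distrr /=.
rewrite (exchange_big_dep (fun s : {ffun V -> G} => s rt == gzero)) /=; last first.
  by move=> h s _ /andP[].
apply: eq_bigr => s srt.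
rewrite (big_pred1 [ffun x => s (val x)]); last first.
  move=> h /=; rewrite srt /=; apply/forallP/eqP => [H|->].
    by apply/ffunP => x; rewrite ffunE; symmetry; apply/eqP/H.
  by move=> x; rewrite ffunE.
congr Cmul; apply: eq_bigr => x _; by rewrite ffunE.
Qed.


Lemma hendy (g : {ffun L -> G}) :
  qfourier P g = \big[Cmul/C1]_(u | u != rt) fourier (fedge P u) (starg g u).
Proof.
rewrite hendy_A.
rewrite (reindex_onto fromD toD); last first.
  by move=> s /eqP; apply: fromD_toD.
transitivity (\big[Cadd/C0]_(d : {ffun V -> G} | d rt == gzero)
   \big[Cmul/C1]_(u | u != rt) Cmul (ghat (starg g u) (d u)) (RtoC (fedge P u (d u)))).
  rewrite (eq_bigl (fun d : {ffun V -> G} => d rt == gzero)); last first.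
    move=> d; rewrite fromD_rt eqxx /=; apply/eqP/eqP => [<-|/toD_fromD //].
    by rewrite ffunE eqxx.
  apply: eq_bigr => d /eqP drt.
  rewrite big_split /=; congr Cmul; last first.
    rewrite (big_morph RtoC RtoC_mul (erefl C1)); apply: eq_bigr => v vrt.
    rewrite HPf //; congr (RtoC (fedge P v _)).
    by rewrite -[in RHS](toD_fromD drt) /toD ffunE (negPf vrt).
  under eq_bigr do rewrite /fromD ffunE (big_morph (ghat _) (ghat_addr Hns _) (ghat_0r _)).
  rewrite (exchange_big_dep (fun u => u != rt)) /=; last by move=> x u _ /andP[].
  apply: eq_bigr => u _; rewrite /starg.
  by rewrite (big_morph (fun a => ghat a (d u)) (fun a b => ghat_addl Hns a b (d u)) (ghat_0l (d u))).
rewrite (big_distr_big_dep gzero) /=; apply: eq_bigl => d.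
apply/idP/familyP.
  move=> /eqP drt u; rewrite unfold_in /=; case: (eqVneq u rt) => [->|urt] /=.
    by rewrite inE drt.
  by rewrite !unfold_in.
move=> H; have := H rt; by rewrite unfold_in /= eqxx /= inE.
Qed.

End Hendy.

Section Comb.
Variables (V : finType) (rt : V) (par : V -> V).
Hypothesis Htree : is_rooted_tree rt par.
Local Notation S u x := (below par u x).

Lemma below_child v x : S v x -> x != v ->
  exists c, [/\ par c = v, S c x & c != v].
Proof.
rewrite below_fconnect => Hc xv.
set n := findex par x v.
have Hn : iter n par x = v by apply: iter_findex.
have n0 : (0 < n)%nat.
  rewrite lt0n; apply/negP => /eqP E; move: Hn; rewrite E /= => E'.
  by move: xv; rewrite E' eqxx.
exists (iter n.-1 par x); split.
- by rewrite -iterS prednK.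
- by rewrite below_fconnect fconnect_iter.
apply/negP => /eqP E.
have Hlt : (n.-1 < order par x)%nat.
  by apply: leq_ltn_trans (leq_pred n) (findex_max Hc).
have := findex_iter Hlt; rewrite E -/n => E2.
have : (n.-1 < n)%nat by rewrite prednK.
by rewrite -{1}E2 ltnn.
Qed.

Lemma path_cross u a p : u != rt -> path (adj rt par) a p ->
  S u a != S u (last a p) -> (u \in a :: p) && (par u \in a :: p).
Proof.
move=> urt; elim: p a => [|b p IH] a /=; first by rewrite eqxx.
case/andP=> Hab Hp Hne.
case: (eqVneq (S u a) (S u b)) => [Eab|Nab].
  have := IH b Hp; rewrite -Eab => /(_ Hne) /andP[H1 H2].
  by apply/andP; split; rewrite in_cons ?H1 ?H2 orbT.
case/orP: Hab => /andP[_ /eqP E].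
  have bu : b = u.
    apply/eqP; apply: contraNT Nab => bu; by rewrite -E (below_step _ bu).
  by rewrite !in_cons -bu E !eqxx !orbT.
have au : a = u.
  apply/eqP; apply: contraNT Nab => au; by rewrite -E (below_step _ au).
by rewrite !in_cons au -E au !eqxx !orbT.
Qed.

Lemma path_side u j k nu : u != rt -> path_through rt par j k nu ->
  S u j = S u k -> S u nu = S u j.
Proof.
move=> urt [p /and4P[Hp /eqP Hl Hu Hnu]] Ejk.
case/splitPl: Hnu Hp Hl Hu => p1 p2 Enu.
rewrite cat_path last_cat Enu => /andP[Hp1 Hp2] Hl Hu.
apply/eqP; rewrite eq_sym; apply/negPn/negP => Hne.
have /andP[u1 pu1] : (u \in j :: p1) && (par u \in j :: p1).
  by apply: path_cross urt Hp1 _; rewrite Enu.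
have /andP[u2 pu2] : (u \in nu :: p2) && (par u \in nu :: p2).
  by apply: path_cross urt Hp2 _; rewrite Hl -Ejk eq_sym.
have Hdis : forall x, x \in j :: p1 -> x \in p2 -> False.
  move=> x H1 H2; move: Hu; rewrite -cat_cons cat_uniq => /and3P[_ /hasP H _].
  by apply: H; exists x.
have Eu : u = nu.
  move: u2; rewrite in_cons => /orP[/eqP //|H]; case: (Hdis _ u1 H).
have Epu : par u = nu.
  move: pu2; rewrite in_cons => /orP[/eqP //|H]; case: (Hdis _ pu1 H).
by move: (par_neq Htree urt); rewrite Epu Eu eqxx.
Qed.

End Comb.

Lemma Cmul_inv (z : C) : z <> C0 -> Cmul z (Cinv z) = C1.
Proof.
case: z => a b Hz.
have Hd : a * a + b * b <> 0.
  move=> E; apply: Hz; have Ha : a = 0 by nra. have Hb : b = 0 by nra.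
  by rewrite Ha Hb.
apply: Cext; rewrite /Cinv /= /Rdiv; field; exact: Hd.
Qed.

Lemma Cmul_neq0 (z w : C) : z <> C0 -> w <> C0 -> Cmul z w <> C0.
Proof.
move=> Hz Hw E; apply: Hw.
by rewrite -(Cmul1 w) -(Cmul_inv Hz) (CmulC z) -CmulA E Cmul0r.
Qed.

Section Leaves.
Variables (V : finType) (rt : V) (par : V -> V).

Lemma leaf_nochild v c : v != rt -> is_leaf rt par v -> c != rt -> par c = v -> False.
Proof.
move=> vrt; rewrite /is_leaf /degree vrt addn1 eqSS cards_eq0 => /eqP E crt pc.
have : c \in children rt par v by rewrite inE crt pc eqxx.
by rewrite E inE.
Qed.

Lemma leaf_par_rt v c : is_leaf rt par v -> c != rt -> par c = v -> v = rt.
Proof. case: (eqVneq v rt) => // vrt Hl crt pc; case: (leaf_nochild vrt Hl crt pc). Qed.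

Lemma root_child_uniq c c' : is_leaf rt par rt -> c != rt -> par c = rt ->
  c' != rt -> par c' = rt -> c = c'.
Proof.
rewrite /is_leaf /degree eqxx addn0 => /cards1P [x Ex] crt pc c'rt pc'.
have H1 : c \in children rt par rt by rewrite inE crt pc eqxx.
have H2 : c' \in children rt par rt by rewrite inE c'rt pc' eqxx.
by move: H1 H2; rewrite Ex !inE => /eqP -> /eqP ->.
Qed.
End Leaves.
Local Close Scope R_scope.

Theorem mainTheorem5
  (ns : seq nat) (Hns : all (fun n => 0 < n)%N ns)
  (V : finType) (rt : V) (par : V -> V)
  (Htree : is_rooted_tree rt par) (Hroot : is_leaf rt par rt)
  (psi : V -> Gty ns -> R)
  (Hpsi_sum : forall v, v != rt -> \big[Rplus/R0]_(g : Gty ns) psi v g = R0)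
  (Hpsi_sym : forall v, v != rt -> forall g, psi v g = psi v (gopp g))
  (P : V -> Gty ns -> Gty ns -> R)
  (HP : forall v, v != rt -> is_mexp (Qmat (psi v)) (P v))
  (e : V) (He : e != rt) (i : leaf rt par) (nu : V)
  (Hpend : ((val i == e) && (nu == par e)) || ((val i == par e) && (nu == e)))
  (Hnu : ~~ is_leaf rt par nu)
  (j k : leaf rt par) (Hji : j != i) (Hki : k != i)
  (Hjk : path_through rt par (val j) (val k) nu) :
  forall h : Gty ns,
    qfourier P (wvec i j k gzero (gopp h) h) <> C0 /\
    Cmul (fourier (fedge P e) h) (fourier (fedge P e) h) =
    Cdiv (Cmul (qfourier P (wvec i j k h (gopp h) gzero))
               (qfourier P (wvec i j k (gopp h) gzero h)))
         (qfourier P (wvec i j k gzero (gopp h) h)).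
Proof.
move=> h.
have HPf : forall v, v != rt -> forall a b, P v a b = fedge P v (gadd b (gopp a)).
  by move=> v vrt a b; apply: (P_f (HP v vrt)).
have Hfc : forall v a, v != rt -> fourier (fedge P v) a = RtoC (exp (lam (psi v) a)).
  by move=> v a vrt; apply: (fourier_f Hns (Hpsi_sym v vrt) (HP v vrt)).
have fc0 : forall v, v != rt -> fourier (fedge P v) gzero = C1.
  by move=> v vrt; rewrite Hfc // (lam0 (Hpsi_sum v vrt)) exp_0.
have fcN : forall v a, v != rt -> fourier (fedge P v) (gopp a) = fourier (fedge P v) a.
  by move=> v a vrt; rewrite !Hfc // (lam_opp Hns (Hpsi_sym v vrt)).
have fcnz : forall v a, v != rt -> fourier (fedge P v) a <> C0.
  move=> v a vrt; rewrite Hfc // => -[E].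
  have := exp_pos (lam (psi v) a); rewrite E; lra.
have Hkj : k != j.
  apply/negP => /eqP Ekj; move: Hjk; rewrite Ekj => -[p /and4P[Hp /eqP Hl Hu Hn]].
  case: p Hp Hl Hu Hn => [|b p] /= _ Hl.
    move=> _; rewrite inE => /eqP E; by move: Hnu; rewrite E (valP j).
  move=> /andP[Hnot _] _; move: Hnot; by rewrite -Hl mem_last.
have Hkj' : k != j by [].
have vji : val j != val i by rewrite (inj_eq val_inj).
have vki : val k != val i by rewrite (inj_eq val_inj).
have KeyE : (below par e (val i) != below par e (val j)) &&
            (below par e (val j) == below par e (val k)).
  case/orP: Hpend => /andP[/eqP Ei /eqP Enu].
    have Hnb : forall x : leaf rt par, x != i -> below par e (val x) = false.
      move=> x xi; apply/negP => Hb.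
      have xe : val x != e by rewrite -Ei (inj_eq val_inj).
      have [c [pc _ ce]] := below_child Hb xe.
      have crt : c != rt.
        apply/negP => /eqP crt; move: ce; rewrite -pc crt; case: Htree => -> _.
        by rewrite eqxx.
      by apply: (leaf_nochild He _ crt pc); rewrite -Ei (valP i).
    by rewrite Ei below_refl !Hnb.
  have irt : val i = rt.
    by apply: (leaf_par_rt (valP i) He); rewrite Ei.
  have Hb : forall x : leaf rt par, x != i -> below par e (val x).
    move=> x xi; have xrt : val x != rt.
      by apply: contra_neq xi => E; apply: val_inj; rewrite E irt.
    have [_ /(_ (val x)) [n Hn]] := Htree.
    have Hbr : below par rt (val x).
      by rewrite below_fconnect; have := fconnect_iter par n (val x); rewrite Hn.
    have [c [pc Hc crt]] := below_child Hbr xrt.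
    by rewrite -(root_child_uniq Hroot crt pc He (etrans (esym Ei) irt)).
  rewrite irt !Hb // eqxx andbT.
  apply/negP => /eqP Hb0; move: He; by rewrite (below_rt Htree Hb0) eqxx.
have KeyU : forall u, u != rt -> u != e ->
    below par u (val j) = below par u (val k) -> below par u (val i) = below par u (val j).
  move=> u urt ue Ejk; rewrite -(path_side Htree urt Hjk Ejk).
  have Hs := below_step par (u:=u) (x:=e); rewrite eq_sym in Hs.
  case/orP: Hpend => /andP[/eqP Ei /eqP Enu]; rewrite Ei Enu Hs //.
have starg_w : forall (a b c : Gty ns) (u : V), starg (wvec i j k a b c) u =
    gadd (if ancd rt par u (val i) then a else gzero)
      (gadd (if ancd rt par u (val j) then b else gzero)
            (if ancd rt par u (val k) then c else gzero)).
  move=> a b c u; rewrite /starg big_mkcond (bigD1 i) //= (bigD1 j) //= ?Hji //.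
  rewrite (bigD1 k) //= ?Hki ?Hkj // big1 => [|x /andP[/andP[xi xj] xk]]; last first.
    by rewrite ffunE (negPf xi) (negPf xj) (negPf xk); case: ifP.
  rewrite !ffunE eqxx (negPf Hji) eqxx (negPf Hki) (negPf Hkj) eqxx gadd0r //.
have Hanc : forall u x, u != rt -> ancd rt par u x = below par u x.
  by move=> u x urt; rewrite /ancd urt.
set F := fun u => fourier (fedge P u) h.
have Eu : forall u, u != rt ->
  Cmul (fourier (fedge P u) (starg (wvec i j k h (gopp h) gzero) u))
       (fourier (fedge P u) (starg (wvec i j k (gopp h) gzero h) u)) =
  Cmul (fourier (fedge P u) (starg (wvec i j k gzero (gopp h) h) u))
       (if u == e then Cmul (F u) (F u) else C1).
  move=> u urt; rewrite !starg_w !Hanc //.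
  case: (eqVneq u e) => [->|ue].
    move: KeyE; case: (below par e (val i)); case: (below par e (val j));
      case: (below par e (val k)) => //= _;
      rewrite ?gadd0 ?gadd0r ?gaddN ?gaddNl ?fc0 ?fcN // /F;
      move: (fourier _ h) => z; cring.
  move: (KeyU u urt ue); case: (below par u (val i)); case: (below par u (val j));
    case: (below par u (val k)) => //= H;
    rewrite ?gadd0 ?gadd0r ?gaddN ?gaddNl ?fc0 ?fcN //;
    try (move: (fourier _ h) => z); try cring;
    by have := H erefl.
have Hq := hendy Hns Htree HPf.
have nz : qfourier P (wvec i j k gzero (gopp h) h) <> C0.
  rewrite Hq; apply: (big_ind (fun z => z <> C0)).
  - move=> E; apply: R1_neq_R0; exact: (f_equal fst E).
  - exact: Cmul_neq0.
  by move=> u urt; apply: fcnz.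
split => //.
have EAB : Cmul (qfourier P (wvec i j k h (gopp h) gzero))
                (qfourier P (wvec i j k (gopp h) gzero h)) =
           Cmul (qfourier P (wvec i j k gzero (gopp h) h)) (Cmul (F e) (F e)).
  rewrite !Hq -big_split /=.
  rewrite (eq_bigr _ Eu) big_split /=; congr Cmul.
  rewrite (bigD1 e) //= eqxx big1 => [|u /andP[_ /negPf ->] //].
  by rewrite CmulC Cmul1.
move: EAB; rewrite /Cdiv.
move: (qfourier _ _) (qfourier _ _) (qfourier _ _) nz => A B Z nz ->.
by rewrite [Cmul Z _]CmulC -CmulA Cmul_inv // [Cmul _ C1]CmulC Cmul1.
Qed.
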